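(* Let $\varepsilon>0$, $k\in\mathbb N$ with $k\ge1$, and $0<r_{\max}<\infty$. Then the mechanism $r\mapsto\mathrm{ScalarDP}(r,\varepsilon;k,r_{\max})$ (on inputs $r\ge0$) is $\varepsilon$-locally differentially private, and for $Z=\mathrm{ScalarDP}(r,\varepsilon;k,r_{\max})$ with $0\le r\le r_{\max}$ we have $\mathbb E[Z]=r$ and \[ \mathbb E[(Z-r)^2]\le \frac{k+1}{e^\varepsilon-1}\Big[r^2+\frac{r_{\max}^2}{4k^2}+\frac{(2k+1)(e^\varepsilon+k)\,r_{\max}^2}{6k(e^\varepsilon-1)}\Big]+\frac{r_{\max}^2}{4k^2}. \]
   Context: $\mathrm{ScalarDP}(r,\varepsilon;k,r_{\max})$: set $r\leftarrow\min\{r,r_{\max}\}$ and $x=kr/r_{\max}$. Sample $J=\lfloor x\rfloor$ with probability $\lceil x\rceil-x$ and $J=\lceil x\rceil$ otherwise (so $J\in\{0,\dots,k\}$). Randomized response: given $J=i$, set $\widehat J=i$ with probability $\frac{e^\varepsilon}{e^\varepsilon+k}$ and otherwise $\widehat J$ uniform on $\{0,\dots,k\}\setminus\{i\}$. Output $Z=a(\widehat J-b)$ with $a=\frac{e^\varepsilon+k}{e^\varepsilon-1}\cdot\frac{r_{\max}}k$ and $b=\frac{k(k+1)}{2(e^\varepsilon+k)}$. A mechanism $M$ is $\varepsilon$-locally differentially private if $\mathbb P(M(r)\in S)\le e^{\varepsilon}\mathbb P(M(r')\in S)$ for all inputs $r,r'$ and sets $S$. *)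

(* Defs.v *)
From Stdlib Require Import Reals Lra ClassicalEpsilon.
Open Scope R_scope.

Definition floorR (x : R) : R := IZR (Int_part x).
Definition ceilR (x : R) : R := - IZR (Int_part (- x)).

Definition sdp_x (k : nat) (rmax r : R) : R := INR k * Rmin r rmax / rmax.

(* Law of J on {0,...,k}: J = floor x w.p. ceil x - x, J = ceil x otherwise. *)
Definition sdp_pJ (k : nat) (rmax r : R) (i : nat) : R :=
  let x := sdp_x k rmax r in
  (if Req_EM_T (INR i) (floorR x) then ceilR x - x else 0)
  + (if Req_EM_T (INR i) (ceilR x) then 1 - (ceilR x - x) else 0).

(* Randomized response kernel: P(Jhat = j | J = i) *)
Definition sdp_rr (eps : R) (k : nat) (i j : nat) : R :=
  if Nat.eq_dec i j then exp eps / (exp eps + INR k)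
  else (1 - exp eps / (exp eps + INR k)) / INR k.

Definition sdp_pJhat (eps : R) (k : nat) (rmax r : R) (j : nat) : R :=
  sum_f_R0 (fun i => sdp_pJ k rmax r i * sdp_rr eps k i j) k.

Definition sdp_a (eps : R) (k : nat) (rmax : R) : R :=
  (exp eps + INR k) / (exp eps - 1) * (rmax / INR k).
Definition sdp_b (eps : R) (k : nat) : R :=
  INR k * (INR k + 1) / (2 * (exp eps + INR k)).

Definition sdp_out (eps : R) (k : nat) (rmax : R) (j : nat) : R :=
  sdp_a eps k rmax * (INR j - sdp_b eps k).

Definition sdp_prob (eps : R) (k : nat) (rmax r : R) (S : R -> Prop) : R :=
  sum_f_R0 (fun j => if excluded_middle_informative (S (sdp_out eps k rmax j))
                     then sdp_pJhat eps k rmax r j else 0) k.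

Definition sdp_expect (eps : R) (k : nat) (rmax r : R) (f : R -> R) : R :=
  sum_f_R0 (fun j => sdp_pJhat eps k rmax r j * f (sdp_out eps k rmax j)) k.

Definition sdp_LDP (eps : R) (k : nat) (rmax : R) : Prop :=
  forall (r r' : R) (S : R -> Prop), 0 <= r -> 0 <= r' ->
    sdp_prob eps k rmax r S <= exp eps * sdp_prob eps k rmax r' S.

(* Main.v *)
Require Import Defs.
From Stdlib Require Import Reals Lra Lia ZArith ClassicalEpsilon.
Open Scope R_scope.

Lemma sumE_ext (f g : nat -> R) n : (forall i, (i <= n)%nat -> f i = g i) -> sum_f_R0 f n = sum_f_R0 g n.
Proof. intros H; induction n; simpl. apply H; lia. rewrite IHn by (intros; apply H; lia). rewrite H by lia. reflexivity. Qed.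

Lemma sumE_add f g n : sum_f_R0 (fun i => f i + g i) n = sum_f_R0 f n + sum_f_R0 g n.
Proof. induction n; simpl; [lra| rewrite IHn; lra]. Qed.

Lemma sumE_scal c f n : sum_f_R0 (fun i => c * f i) n = c * sum_f_R0 f n.
Proof. induction n; simpl; [lra| rewrite IHn; ring]. Qed.

Lemma sumE_le f g n : (forall i, (i<=n)%nat -> f i <= g i) -> sum_f_R0 f n <= sum_f_R0 g n.
Proof. intros H; induction n; simpl. apply H; lia. apply Rplus_le_compat. apply IHn; intros; apply H; lia. apply H; lia. Qed.

Lemma sum_zero n : sum_f_R0 (fun _ => 0) n = 0.
Proof. induction n; simpl; lra. Qed.

Lemma sum_delta (g h : nat -> R) n0 k : (n0 <= k)%nat ->
  (forall i, h i = if Nat.eq_dec i n0 then g i else 0) ->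
  sum_f_R0 h k = g n0.
Proof.
  intros H Hh. induction k.
  - assert (n0 = 0)%nat by lia; subst; simpl. rewrite Hh. destruct (Nat.eq_dec 0 0); [reflexivity|congruence].
  - destruct (Nat.eq_dec n0 (S k)).
    + subst. rewrite tech5. rewrite (sumE_ext _ (fun _ => 0)).
      * rewrite sum_zero, Hh. destruct (Nat.eq_dec (S k) (S k)); [lra|congruence].
      * intros i hi. rewrite Hh. destruct (Nat.eq_dec i (S k)); [lia|reflexivity].
    + rewrite tech5, IHk by lia. rewrite Hh. destruct (Nat.eq_dec (S k) n0); [lia| lra].
Qed.

Lemma sum_lin u v k : sum_f_R0 (fun j => u * INR j + v) k
  = u * (INR k * (INR k + 1) / 2) + v * (INR k + 1).
Proof. induction k. simpl; field. rewrite tech5, IHk, S_INR; field. Qed.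

Lemma sum_sq u v k : sum_f_R0 (fun j => (u * INR j + v)^2) k
  = u^2 * (INR k * (INR k + 1) * (2 * INR k + 1) / 6) + u * v * (INR k * (INR k + 1)) + v^2 * (INR k + 1).
Proof. induction k. simpl; field. rewrite tech5, IHk, S_INR; field. Qed.

Lemma floor_ceil (x : R) (K : nat) : 0 <= x <= INR K ->
  exists n0 n1 : nat, floorR x = INR n0 /\ ceilR x = INR n1 /\ (n0 <= K)%nat /\ (n1 <= K)%nat
   /\ INR n0 <= x <= INR n1 /\ (n1 = n0 \/ n1 = S n0).
Proof.
  intros [hx0 hxK].
  destruct (base_Int_part x) as [f1 f2].
  destruct (base_Int_part (-x)) as [g1 g2].
  unfold floorR, ceilR.
  set (z0 := Int_part x) in *. set (z1 := Int_part (-x)) in *.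
  assert (hz0 : (-1 < z0)%Z) by (apply lt_IZR; lra).
  assert (hz1 : (z1 <= 0)%Z) by (apply le_IZR; lra).
  exists (Z.to_nat z0), (Z.to_nat (- z1)).
  assert (e0 : INR (Z.to_nat z0) = IZR z0) by (rewrite INR_IZR_INZ, Z2Nat.id; [reflexivity|lia]).
  assert (e1 : INR (Z.to_nat (-z1)) = - IZR z1) by (rewrite INR_IZR_INZ, Z2Nat.id, opp_IZR; [reflexivity|lia]).
  rewrite e0, e1.
  assert (a0 : (Z.to_nat z0 <= K)%nat) by (apply INR_le; lra).
  assert (a1 : (Z.to_nat (-z1) < S K)%nat) by (apply INR_lt; rewrite S_INR; lra).
  assert (a2 : (Z.to_nat z0 <= Z.to_nat (-z1))%nat) by (apply INR_le; lra).
  assert (a3 : (Z.to_nat (-z1) < S (S (Z.to_nat z0)))%nat) by (apply INR_lt; rewrite !S_INR; lra).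
  repeat split; try lra; try lia.
Qed.

Lemma setup k rmax r : (1<=k)%nat -> 0<rmax -> 0 <= r ->
  exists n0 n1, floorR (sdp_x k rmax r) = INR n0 /\ ceilR (sdp_x k rmax r) = INR n1
   /\ (n0 <= k)%nat /\ (n1 <= k)%nat /\ INR n0 <= sdp_x k rmax r <= INR n1 /\ (n1 = n0 \/ n1 = S n0).
Proof.
  intros hk hr h0. apply floor_ceil.
  assert (hK : 1 <= INR k) by (replace 1 with (INR 1) by reflexivity; apply le_INR; exact hk).
  assert (hm : 0 <= Rmin r rmax <= rmax).
  { split. apply Rmin_glb; lra. apply Rmin_r. }
  assert (hx : sdp_x k rmax r * rmax = INR k * Rmin r rmax) by (unfold sdp_x; field; lra).
  split; nra.
Qed.

Lemma pJ_form k rmax r n0 n1 : floorR (sdp_x k rmax r) = INR n0 -> ceilR (sdp_x k rmax r) = INR n1 ->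
  forall i, sdp_pJ k rmax r i = (if Nat.eq_dec i n0 then INR n1 - sdp_x k rmax r else 0)
     + (if Nat.eq_dec i n1 then 1 - (INR n1 - sdp_x k rmax r) else 0).
Proof.
  intros H0 H1 i. unfold sdp_pJ. cbv zeta. rewrite H0, H1.
  destruct (Req_EM_T (INR i) (INR n0)) as [e|e]; destruct (Nat.eq_dec i n0) as [e'|e'];
  try (apply INR_eq in e; congruence); try (subst; congruence);
  destruct (Req_EM_T (INR i) (INR n1)) as [f|f]; destruct (Nat.eq_dec i n1) as [f'|f'];
  try (apply INR_eq in f; congruence); try (subst; congruence); reflexivity.
Qed.

Lemma rr_form eps k i j : (1<=k)%nat -> sdp_rr eps k i j = 1/(exp eps + INR k)
   + (if Nat.eq_dec j i then (exp eps - 1)/(exp eps + INR k) else 0).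
Proof.
  intros hk. assert (hK : 1 <= INR k) by (replace 1 with (INR 1) by reflexivity; apply le_INR; exact hk).
  pose proof (exp_pos eps).
  unfold sdp_rr. destruct (Nat.eq_dec i j); destruct (Nat.eq_dec j i); try lia; field; lra.
Qed.

Lemma rr_sum eps k n h F : (1<=k)%nat -> (n<=k)%nat -> (forall j, h j = sdp_rr eps k n j * F j) ->
  sum_f_R0 h k = sum_f_R0 F k / (exp eps + INR k) + (exp eps - 1)/(exp eps + INR k) * F n.
Proof.
  intros hk hn Hh.
  assert (hK : 1 <= INR k) by (replace 1 with (INR 1) by reflexivity; apply le_INR; exact hk).
  pose proof (exp_pos eps).
  rewrite (sumE_ext _ (fun j => (1/(exp eps + INR k)) * F j + (if Nat.eq_dec j n then (exp eps - 1)/(exp eps + INR k) * F j else 0))).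
  2: { intros i _; rewrite Hh. rewrite rr_form by exact hk. destruct (Nat.eq_dec i n); ring. }
  rewrite sumE_add, sumE_scal.
  rewrite (sum_delta (fun j => (exp eps - 1)/(exp eps + INR k) * F j) (fun j => if Nat.eq_dec j n then (exp eps - 1)/(exp eps + INR k) * F j else 0) n k hn) by (intros; reflexivity).
  field; lra.
Qed.

Lemma pJhat_form eps k rmax r n0 n1 : (n0 <= k)%nat -> (n1 <= k)%nat ->
  floorR (sdp_x k rmax r) = INR n0 -> ceilR (sdp_x k rmax r) = INR n1 ->
  forall j, sdp_pJhat eps k rmax r j = (INR n1 - sdp_x k rmax r) * sdp_rr eps k n0 j
     + (1 - (INR n1 - sdp_x k rmax r)) * sdp_rr eps k n1 j.
Proof.
  intros h0 h1 H0 H1 j. unfold sdp_pJhat.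
  set (p0 := INR n1 - sdp_x k rmax r).
  rewrite (sumE_ext _ (fun i => (if Nat.eq_dec i n0 then p0 * sdp_rr eps k i j else 0)
     + (if Nat.eq_dec i n1 then (1 - p0) * sdp_rr eps k i j else 0))).
  2: { intros i _. rewrite (pJ_form k rmax r n0 n1 H0 H1). fold p0.
       destruct (Nat.eq_dec i n0); destruct (Nat.eq_dec i n1); ring. }
  rewrite sumE_add.
  rewrite (sum_delta (fun i => p0 * sdp_rr eps k i j) (fun i => if Nat.eq_dec i n0 then p0 * sdp_rr eps k i j else 0) n0 k h0) by (intros; reflexivity).
  rewrite (sum_delta (fun i => (1 - p0) * sdp_rr eps k i j) (fun i => if Nat.eq_dec i n1 then (1 - p0) * sdp_rr eps k i j else 0) n1 k h1) by (intros; reflexivity).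
  reflexivity.
Qed.

Lemma expect_form eps k rmax r n0 n1 f : (1<=k)%nat -> (n0 <= k)%nat -> (n1 <= k)%nat ->
  floorR (sdp_x k rmax r) = INR n0 -> ceilR (sdp_x k rmax r) = INR n1 ->
  sdp_expect eps k rmax r f = sum_f_R0 (fun j => f (sdp_out eps k rmax j)) k / (exp eps + INR k)
    + (exp eps - 1)/(exp eps + INR k) *
      ((INR n1 - sdp_x k rmax r) * f (sdp_out eps k rmax n0)
       + (1 - (INR n1 - sdp_x k rmax r)) * f (sdp_out eps k rmax n1)).
Proof.
  intros hk h0 h1 H0 H1. unfold sdp_expect.
  set (p0 := INR n1 - sdp_x k rmax r).
  rewrite (sumE_ext _ (fun j => p0 * (sdp_rr eps k n0 j * f (sdp_out eps k rmax j))
      + (1 - p0) * (sdp_rr eps k n1 j * f (sdp_out eps k rmax j)))).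
  2: { intros j _. rewrite (pJhat_form eps k rmax r n0 n1 h0 h1 H0 H1). fold p0. ring. }
  rewrite sumE_add, !sumE_scal.
  rewrite (rr_sum eps k n0 (fun j => sdp_rr eps k n0 j * f (sdp_out eps k rmax j)) (fun j => f (sdp_out eps k rmax j)) hk h0) by (intros; reflexivity).
  rewrite (rr_sum eps k n1 (fun j => sdp_rr eps k n1 j * f (sdp_out eps k rmax j)) (fun j => f (sdp_out eps k rmax j)) hk h1) by (intros; reflexivity).
  ring.
Qed.

Lemma pJhat_bounds eps k rmax r j : 0 < eps -> (1<=k)%nat -> 0 < rmax -> 0 <= r ->
  1/(exp eps + INR k) <= sdp_pJhat eps k rmax r j <= exp eps/(exp eps + INR k).
Proof.
  intros he hk hr h0.
  assert (hK : 1 <= INR k) by (replace 1 with (INR 1) by reflexivity; apply le_INR; exact hk).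
  assert (hE : 1 < exp eps) by (rewrite <- exp_0; apply exp_increasing; lra).
  destruct (setup k rmax r hk hr h0) as (n0 & n1 & H0 & H1 & a0 & a1 & [b0 b1] & _).
  rewrite (pJhat_form eps k rmax r n0 n1 a0 a1 H0 H1), !rr_form by exact hk.
  assert (hlo : 0 < 1/(exp eps + INR k)) by (apply Rdiv_lt_0_compat; lra).
  assert (hd : 0 <= (exp eps - 1)/(exp eps + INR k)) by (unfold Rdiv; apply Rmult_le_pos; [lra| left; apply Rinv_0_lt_compat; lra]).
  assert (hs : exp eps/(exp eps + INR k) = 1/(exp eps + INR k) + (exp eps - 1)/(exp eps + INR k)) by (field; lra).
  rewrite hs.
  assert (hp : INR n1 - sdp_x k rmax r <= 1).
  { unfold ceilR in H1. destruct (base_Int_part (- sdp_x k rmax r)). lra. }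
  set (lo := 1/(exp eps + INR k)) in *. set (d := (exp eps - 1)/(exp eps + INR k)) in *.
  destruct (Nat.eq_dec j n0); destruct (Nat.eq_dec j n1); split; nra.
Qed.

Theorem lemma4p9 (eps : R) (k : nat) (rmax : R)
  (heps : 0 < eps) (hk : (1 <= k)%nat) (hrmax : 0 < rmax) :
  sdp_LDP eps k rmax /\
  (forall r : R, 0 <= r <= rmax ->
     sdp_expect eps k rmax r (fun z => z) = r /\
     sdp_expect eps k rmax r (fun z => (z - r) ^ 2) <=
       (INR k + 1) / (exp eps - 1) *
         (r ^ 2 + rmax ^ 2 / (4 * INR k ^ 2)
          + (2 * INR k + 1) * (exp eps + INR k) * rmax ^ 2
            / (6 * INR k * (exp eps - 1)))
       + rmax ^ 2 / (4 * INR k ^ 2)).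
Proof.
  assert (hE : 1 < exp eps) by (rewrite <- exp_0; apply exp_increasing; lra).
  assert (hK : 1 <= INR k) by (replace 1 with (INR 1) by reflexivity; apply le_INR; exact hk).
  split.
  - unfold sdp_LDP, sdp_prob. intros r r' S hr hr'.
    rewrite <- sumE_scal. apply sumE_le. intros j _.
    destruct (excluded_middle_informative _); [|lra].
    destruct (pJhat_bounds eps k rmax r j heps hk hrmax hr) as [_ H1].
    destruct (pJhat_bounds eps k rmax r' j heps hk hrmax hr') as [H2 _].
    assert (exp eps / (exp eps + INR k) = exp eps * (1/(exp eps + INR k))) by (field; lra).
    nra.
  - intros r [hr0 hr1].
    destruct (setup k rmax r hk hrmax hr0) as (n0 & n1 & H0 & H1 & a0 & a1 & [b0 b1] & hn).
    assert (hEJ : (INR n1 - sdp_x k rmax r) * INR n0 + (1 - (INR n1 - sdp_x k rmax r)) * INR n1 = sdp_x k rmax r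
      /\ (INR n1 - sdp_x k rmax r) * INR n0 ^ 2 + (1 - (INR n1 - sdp_x k rmax r)) * INR n1 ^ 2
         <= sdp_x k rmax r ^ 2 + 1/4).
    { destruct hn as [-> | ->].
      - assert (INR n0 = sdp_x k rmax r) by lra. rewrite <- H. split; [ring| nra].
      - rewrite S_INR in *. split; [ring|].
        pose proof (pow2_ge_0 (2 * sdp_x k rmax r - 2 * INR n0 - 1)); nra. }
    destruct hEJ as [hEJ hW].
    assert (hx : sdp_x k rmax r = INR k * r / rmax) by (unfold sdp_x; rewrite Rmin_left by lra; reflexivity).
    assert (hx0 : 0 <= sdp_x k rmax r) by (pose proof (pos_INR n0); lra).
    rewrite !(expect_form eps k rmax r n0 n1 _ hk a0 a1 H0 H1).
    cbv beta.
    set (x := sdp_x k rmax r) in *.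
    set (p0 := INR n1 - x) in *.
    set (E := exp eps) in *. set (K := INR k) in *.
    set (m0 := INR n0) in *. set (m1 := INR n1) in *.
    split.
    + rewrite (sumE_ext _ (fun j => sdp_a eps k rmax * INR j + (- (sdp_a eps k rmax * sdp_b eps k)))).
      2: { intros; unfold sdp_out; ring. }
      rewrite sum_lin. fold K.
      unfold sdp_out. fold K.
      set (a := sdp_a eps k rmax). set (b := sdp_b eps k).
      assert (Hid : (a * (K * (K + 1) / 2) + - (a * b) * (K + 1)) / (E + K) +
        (E - 1) / (E + K) * (p0 * (a * (m0 - b)) + (1 - p0) * (a * (m1 - b)))
        = r + (E-1)/(E+K) * a * (p0 * m0 + (1-p0)*m1 - x)).
      { unfold a, b, sdp_a, sdp_b. fold E K. rewrite hx. field. repeat split; apply Rgt_not_eq; lra. }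
      fold m0 m1. rewrite Hid, hEJ. ring.
    + rewrite (sumE_ext _ (fun j => (sdp_a eps k rmax * INR j + (- (sdp_a eps k rmax * sdp_b eps k) - r))^2)).
      2: { intros; unfold sdp_out; ring. }
      rewrite sum_sq. fold K.
      unfold sdp_out. fold K m0 m1.
      set (a := sdp_a eps k rmax). set (b := sdp_b eps k).
      set (c := (E-1)/(E+K)).
      set (S2 := K * (K + 1) * (2 * K + 1) / 6).
      set (W := p0 * m0 ^ 2 + (1 - p0) * m1 ^ 2) in *.
      assert (Hid : (a ^ 2 * S2 + a * (- (a * b) - r) * (K * (K + 1)) + (- (a * b) - r) ^ 2 * (K + 1)) / (E + K)
        + c * (p0 * (a * (m0 - b) - r) ^ 2 + (1 - p0) * (a * (m1 - b) - r) ^ 2)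
        = a^2*(c*W + S2/(E+K) - (c*x+b)^2) - 2*a^2*c*(b + c*x)*(p0 * m0 + (1-p0)*m1 - x)).
      { unfold W, c, S2, a, b, sdp_a, sdp_b. fold E K. rewrite hx. field. repeat split; apply Rgt_not_eq; lra. }
      rewrite Hid.
      replace (p0 * m0 + (1-p0)*m1 - x) with 0 by lra.
      rewrite Rmult_0_r, Rminus_0_r.
      assert (hc : 0 < c) by (unfold c; apply Rdiv_lt_0_compat; lra).
      assert (hb : 0 <= b).
      { unfold b, sdp_b. fold E K. unfold Rdiv. apply Rmult_le_pos. nra.
        left; apply Rinv_0_lt_compat; lra. }
      assert (hin : c*W + S2/(E+K) - (c*x+b)^2 <= c*x^2 + c/4 + S2/(E+K) - c^2*x^2).
      { pose proof (Rmult_le_pos c (x^2+1/4-W) ltac:(lra) ltac:(lra)).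
        pose proof (Rmult_le_pos (c*x) b ltac:(nra) hb).
        pose proof (pow2_ge_0 b). nra. }
      apply Rle_trans with (a^2*(c*x^2 + c/4 + S2/(E+K) - c^2*x^2)).
      * apply Rmult_le_compat_l; [apply pow2_ge_0| exact hin].
      * right. unfold c, S2, a, sdp_a. fold E K. rewrite hx. field.
        repeat split; apply Rgt_not_eq; lra.
Qed.
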